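(* Let $d\ge2$, $\varepsilon\in(0,1)$, $c\in\{1,2,\dots\}\cup\{\infty\}$, and let $W$ be the gap process of the $d$-ball SBBS. Fix $j\in\{1,\dots,d-1\}$ and let $x\in\mathbb Z^{d-1}_{\ge0}$ with $x_j=0$, $x_{j+1}\ge2$ (if $j+1\le d-1$) and $x_i\ge1$ for all $i\notin\{j,j+1\}$. Then $R_j:=\mathbb E[W_1-W_0\mid W_0=x]\in\mathbb R^{d-1}$ is given, with coordinates outside $\{1,\dots,d-1\}$ omitted and all unlisted coordinates equal to $0$, by: - if $c=1$: $(R_j)_j=\varepsilon(1-\varepsilon)$, $(R_j)_{j+1}=-\varepsilon(1-\varepsilon)$; - if $c\ge2$: $(R_j)_{j-1}=(1-\varepsilon)^2$, $(R_j)_j=\varepsilon(1-\varepsilon)$, $(R_j)_{j+1}=-(1-\varepsilon)$. In particular the $(d-1)\times(d-1)$ matrix $[R_1,\dots,R_{d-1}]$ equals $(1-\varepsilon)\hat R^{\varepsilon,c}$.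
   Context: Stochastic box-ball system (SBBS). Fix an error probability $\varepsilon\in[0,1]$ and a capacity $c\in\{1,2,\dots\}\cup\{\infty\}$. A configuration is $\zeta\in\{0,1\}^{\mathbb N}$, $\mathbb N=\{1,2,\dots\}$, with finitely many $1$'s (balls). Given $\zeta$, the stochastic carrier process $\Gamma$ is defined by $\Gamma(0)=0$ and recursively (with fresh independent randomness at each $k$): $\Gamma(k)=\Gamma(k-1)+1$ with probability $1-\varepsilon$ (and $\Gamma(k)=\Gamma(k-1)$ otherwise) if $\zeta(k)=1$ and $\Gamma(k-1)<c$; $\Gamma(k)=\Gamma(k-1)-1$ if $\zeta(k)=0$ and $\Gamma(k-1)\ge1$; $\Gamma(k)=\Gamma(k-1)$ otherwise. The new configuration is $\zeta'(k)=\mathbf 1(\Gamma(k)-\Gamma(k-1)=-1)+\mathbf 1(\Gamma(k)=\Gamma(k-1),\ \zeta(k)=1)$. Iterating independently gives the SBBS trajectory. With $d$ balls at positions $\zeta^{(1)}_t<\dots<\zeta^{(d)}_t$, the gap process is $W_t=(W^1_t,\dots,W^{d-1}_t)$, $W^i_t=\zeta^{(i+1)}_t-\zeta^{(i)}_t-1$, a time-homogeneous Markov chain on $\mathbb Z^{d-1}_{\ge0}$. $\mathrm{tridiag}_r(a,b,c)$ is the $r\times r$ tridiagonal matrix with diagonal $b$, subdiagonal $a$, superdiagonal $c$; $R_{\mathrm{PT}}=\mathrm{tridiag}_{d-1}(-1,1,0)$; $\hat R^{\varepsilon,c}=\varepsilon R_{\mathrm{PT}}$ if $c=1$ and $\hat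 R^{\varepsilon,c}=\mathrm{tridiag}_{d-1}(-1,\varepsilon,1-\varepsilon)$ if $c\ge2$. *)

(* Defs.v *)
From HB Require Import structures.
From mathcomp Require Import all_boot all_order all_algebra.
Set Implicit Arguments. Unset Strict Implicit. Unset Printing Implicit Defensive.
Import Order.TTheory GRing.Theory Num.Theory.
Local Open Scope ring_scope.

Inductive cap := CapFin of nat | CapInf.

Definition is_cap1 (c : cap) : bool :=
  match c with CapFin 1 => true | _ => false end.

Definition below_cap (c : cap) (g : nat) : bool :=
  match c with CapFin n => (g < n)%N | CapInf => true end.

(* Stochastic carrier process, given the configuration zeta : nat -> bool
   (sites 1,2,...) and the outcome of the fresh Bernoulli(1-eps) coin at
   each site k (coin k = true means "pick up", probability 1-eps). *)
Fixpoint sbbs_gamma (c : cap) (zeta coin : nat -> bool) (k : nat) : nat :=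
  (if k is k'.+1 then
    let g := sbbs_gamma c zeta coin k' in
    if zeta k && below_cap c g then (if coin k then g.+1 else g)
    else if ~~ zeta k && (0 < g) then g.-1
    else g
  else 0)%N.

Definition sbbs_next (c : cap) (zeta coin : nat -> bool) (k : nat) : bool :=
  let G := sbbs_gamma c zeta coin in
  (((G k).+1 == G k.-1) || ((G k == G k.-1) && zeta k))%N.

(* p : nat -> nat lists (0-based) the positions of the d balls of z, increasingly. *)
Definition balls_at (z : nat -> bool) (d : nat) (p : nat -> nat) : Prop :=
  [/\ forall i, (i.+1 < d)%N -> (p i < p i.+1)%N,
      (1 <= p 0)%N &
      forall k, (1 <= k)%N -> z k = [exists i : 'I_d, p i == k]].

(* i-th gap (1 <= i <= d-1): W^i = zeta^{(i+1)} - zeta^{(i)} - 1,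
   paper's ball i+1 being our 0-based ball i. *)
Definition gap (p : nat -> nat) (i : nat) : nat := (p i - p i.-1 - 1)%N.

(* Initial positions: first ball at a >= 1, gaps x_1, ..., x_{d-1}. *)
Definition init_pos (a : nat) (x : nat -> nat) (i : nat) : nat :=
  (a + i + \sum_(1 <= m < i.+1) x m)%N.

Definition config_of (d : nat) (p : nat -> nat) (k : nat) : bool :=
  [exists i : 'I_d, p i == k].

(* One coin per ball (ball i at position p i); coins at empty sites are never used. *)
Definition coin_of (d : nat) (p : nat -> nat) (w : {ffun 'I_d -> bool}) (k : nat) : bool :=
  [forall i : 'I_d, (p i == k) ==> w i].

Definition coin_prob (R : nzRingType) (d : nat) (eps : R) (w : {ffun 'I_d -> bool}) : R :=
  \prod_(i < d) (if w i then 1 - eps else eps).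

Definition tridiag (R : nzRingType) (r : nat) (a b c : R) : 'M[R]_r :=
  \matrix_(i < r, j < r)
    (if i == j then b
     else if (i : nat) == j.+1 then a
     else if (j : nat) == i.+1 then c else 0).

Definition R_PT (R : nzRingType) (d : nat) : 'M[R]_(d.-1) := tridiag d.-1 (-1) 1 0.

Definition Rhat (R : nzRingType) (d : nat) (eps : R) (c : cap) : 'M[R]_(d.-1) :=
  if is_cap1 c then eps *: R_PT R d else tridiag d.-1 (-1) eps (1 - eps).

Definition drift_formula (R : nzRingType) (eps : R) (c : cap) (j i : nat) : R :=
  if is_cap1 c then
    (if i == j then eps * (1 - eps)
     else if i == j.+1 then - (eps * (1 - eps)) else 0)
  else
    (if ((1 <= i) && (i == j.-1))%N then (1 - eps) ^+ 2
     else if i == j then eps * (1 - eps)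
     else if i == j.+1 then - (1 - eps) else 0).


(* Entry (i,j) of an r x r matrix with 1-based indices (0 outside the range). *)
Definition entry1 (R : nzRingType) (r : nat) (M : 'M[R]_r) (i j : nat) : R :=
  match @insub _ (fun k => k < r)%N _ i.-1, @insub _ (fun k => k < r)%N _ j.-1 with
  | Some i', Some j' => M i' j'
  | _, _ => 0
  end.

(* Main.v *)
Require Import Defs.
From HB Require Import structures.
From mathcomp Require Import all_boot all_order all_algebra.
From mathcomp Require Import zify ring lra.
Import Order.TTheory GRing.Theory Num.Theory.
Set Implicit Arguments. Unset Strict Implicit. Unset Printing Implicit Defensive.

Definition wn d (w : {ffun 'I_d -> bool}) (i : nat) : bool :=
  [exists o : 'I_d, (val o == i) && w o].

Lemma wnE d w (o : 'I_d) : wn w o = w o.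
Proof.
apply/existsP/idP => [[o' /andP [/eqP/val_inj -> //]]|wo]; by exists o; rewrite eqxx.
Qed.

Definition hyp d j x : Prop :=
  [/\ 1 <= j <= d.-1, x j = 0, (j.+1 <= d.-1 -> 2 <= x j.+1) &
      forall i, 1 <= i <= d.-1 -> i <> j -> i <> j.+1 -> 1 <= x i].

Definition disp c d j (w : {ffun 'I_d -> bool}) i : nat :=
  if i == j.-1 then (if is_cap1 c then nat_of_bool (wn w i)
                     else wn w i + (wn w i && wn w j))
  else if i == j then (if is_cap1 c then nat_of_bool (wn w j.-1 || wn w j)
                       else wn w j.-1 + wn w j)
  else nat_of_bool (wn w i).

Definition hval c d j (w : {ffun 'I_d -> bool}) i r : nat :=
  if i == j then
    (if r == 0 then (if is_cap1 c then nat_of_bool (wn w j.-1 || wn w j)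
                     else wn w j.-1 + wn w j)
     else if r == 1 then (if is_cap1 c then 0 else nat_of_bool (wn w j.-1 && wn w j))
     else 0)
  else (if r == 0 then nat_of_bool (wn w i) else 0).

Definition inseg d (p : nat -> nat) i k := (p i <= k) && ((i.+1 < d) ==> (k < p i.+1)).

Lemma p0S a x i : init_pos a x i.+1 = (init_pos a x i + x i.+1).+1.
Proof. rewrite /init_pos big_nat_recr //=; lia. Qed.

Lemma p0_lt a x m n : m < n -> init_pos a x m < init_pos a x n.
Proof.
elim: n => // n IH; rewrite ltnS leq_eqVlt => /orP [/eqP ->|/IH h]; rewrite p0S; lia.
Qed.

Lemma p0_le a x m n : m <= n -> init_pos a x m <= init_pos a x n.
Proof. rewrite leq_eqVlt => /orP [/eqP -> //|/(p0_lt a x)]; lia. Qed.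

Lemma p0_ltE a x m n : (init_pos a x m < init_pos a x n) = (m < n).
Proof.
apply/idP/idP; last exact: p0_lt.
case: (ltnP m n) => // h; have := p0_le a x h; lia.
Qed.

Lemma p0_eqE a x m n : (init_pos a x m == init_pos a x n) = (m == n).
Proof.
case: (ltngtP m n) => h; last by rewrite h eqxx.
  by have := p0_lt a x h; rewrite ltn_neqAle => /andP [/negbTE ->].
by have := p0_lt a x h; rewrite ltn_neqAle eq_sym => /andP [/negbTE ->].
Qed.

Lemma zeta_seg d a x i k : i < d -> inseg d (init_pos a x) i k ->
  config_of d (init_pos a x) k = (k == init_pos a x i).
Proof.
move=> id /andP [h1 h2]; apply/existsP/idP => [[o /eqP ko]|/eqP ->].
  rewrite -ko p0_eqE; case: (ltngtP o i) => // h.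
    have := p0_lt a x h; lia.
  have hi : i.+1 < d by apply: leq_ltn_trans (ltn_ord o).
  have := p0_le a x h; move: h2; rewrite hi /=; lia.
by exists (Ordinal id).
Qed.

Lemma zeta_pre d a x k : k < init_pos a x 0 -> config_of d (init_pos a x) k = false.
Proof.
move=> h; apply/existsP => [[o /eqP e]]; have := p0_le a x (leq0n o); lia.
Qed.

Lemma coin_at d a x (w : {ffun 'I_d -> bool}) i : i < d -> coin_of (init_pos a x) w (init_pos a x i) = wn w i.
Proof.
move=> id; apply/forallP/existsP => [H|[o /andP [/eqP oi wo]] o'].
  exists (Ordinal id); rewrite eqxx /=; by have := H (Ordinal id); rewrite eqxx.
by rewrite p0_eqE -oi; apply/implyP => /eqP/val_inj ->.
Qed.

Lemma locate d a x k : 0 < d -> init_pos a x 0 <= k ->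
  exists2 i, i < d & inseg d (init_pos a x) i k.
Proof.
move=> d0 h.
suff: forall n, n < d -> exists2 i, i <= n & (init_pos a x i <= k) && ((i < n) ==> (k < init_pos a x i.+1)).
  case/(_ d.-1 (ltac:(lia))) => i i1 /andP [h1 h2]; exists i; first lia.
  rewrite /inseg h1 /=; apply/implyP => hh; apply: (implyP h2); lia.
elim=> [_|n IH nd]; first by exists 0 => //; rewrite h.
case: IH; first lia.
move=> i i1 /andP [h1 h2].
case: (ltnP i n) => hin.
  exists i; first lia. by rewrite h1 /= (implyP h2 hin) implybT.
case: (ltnP k (init_pos a x i.+1)) => hk.
  exists i; first lia. by rewrite h1 hk implybT.
exists n.+1 => //; rewrite ltnn /= andbT; have -> : n.+1 = i.+1 by lia. done.
Qed.

Lemma gammaS c z co k : sbbs_gamma c z co k.+1 =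
  (let g := sbbs_gamma c z co k in
   if z k.+1 && below_cap c g then (if co k.+1 then g.+1 else g)
   else if ~~ z k.+1 && (0 < g) then g.-1 else g).
Proof. by []. Qed.

Lemma hval_last c d j x (w : {ffun 'I_d -> bool}) i : hyp d j x -> 1 <= i <= d.-1 ->
  hval c j w i.-1 (x i) = if i == j then nat_of_bool (wn w j.-1) else 0.
Proof.
case=> hj xj xj1 xo hi; rewrite /hval.
case: (eqVneq i j) => [->|nij].
  by rewrite xj (_ : (j.-1 == j) = false) //; lia.
case: (eqVneq i.-1 j) => [e|ne].
  have : 2 <= x i by rewrite -(_ : j.+1 = i) ?xj1; lia.
  by case: (x i) => [|[|n]].
have h : 1 <= x i.
  apply: xo => // e; [by rewrite e eqxx in nij | by rewrite e /= eqxx in ne].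
by case: (x i) h.
Qed.

Lemma hval_step c d j (w : {ffun 'I_d -> bool}) i r :
  hval c j w i r.+1 = (hval c j w i r).-1.
Proof.
rewrite /hval; case: (i == j); case: r => [|[|r]] //=; case: (is_cap1 c) => //=; case: (wn w j.-1); case: (wn w j); case: (wn w i) => //=.



Qed.

Lemma G_val c d j x a (w : {ffun 'I_d -> bool}) :
  c <> CapFin 0 -> 1 <= a -> 2 <= d -> hyp d j x -> forall k,
  let G := sbbs_gamma c (config_of d (init_pos a x)) (coin_of (init_pos a x) w) in
  (k < init_pos a x 0 -> G k = 0) /\
  (forall i, i < d -> inseg d (init_pos a x) i k -> G k = hval c j w i (k - init_pos a x i)).
Proof.
move=> hc ha hd hy; have [hj xj xj1 xo] := hy.
have bc0 : below_cap c 0 = true by case: c hc => [[|[|n]]|].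
have bc1 : below_cap c 1 = ~~ is_cap1 c by clear bc0; case: c hc => [[|[|n]]|].
set p := init_pos a x => k G.
have p00 : 0 < p 0 by rewrite /p /init_pos; lia.
elim: k => [|k [H0 H1]].
  split=> // i id /andP [h _]; have := p0_le a x (leq0n i); rewrite -/p; lia.
split.
  move=> hk; rewrite /G gammaS /= -/G H0 ?zeta_pre //; lia.
move=> i id hs.
case: (eqVneq k.+1 (p i)) => [e|ne].
  have Gk : G k = if i == j then nat_of_bool (wn w j.-1) else 0.
    case: i id hs e => [|i] id hs e.
      rewrite H0; last lia. have -> : (0 == j) = false by lia. by [].
    have hs' : inseg d p i k.
      rewrite /inseg; apply/andP; split.
        have := p0_lt a x (ltnSn i); rewrite -/p; lia.
      by apply/implyP => _; rewrite e.
    rewrite (H1 i) //; last lia.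
    have -> : k - p i = x i.+1 by move: e; rewrite /p p0S; lia.
    by rewrite -(hval_last c w hy) //; lia.
  rewrite /G gammaS /= -/G e (@zeta_seg d a x i (p i)) //; last by rewrite -e.
  rewrite eqxx (@coin_at d a x w i) // Gk -e subnn /hval /=.
  case: (eqVneq i j) => [->|nij] /=.
    by case: (wn w j.-1); case: (wn w j); rewrite /= ?bc0 ?bc1; case: (is_cap1 c).
  by case: (wn w i); rewrite /= ?bc0.
have hs' : inseg d p i k.
  move: hs; rewrite /inseg => /andP [h1 h2]; apply/andP; split.
    by move: h1 ne; rewrite leq_eqVlt eq_sym => /orP [->|].
  apply/implyP => hi; have := implyP h2 hi; lia.
have zf : config_of d p k.+1 = false.
  rewrite (@zeta_seg d a x i) //; exact/negbTE.
have -> : k.+1 - p i = (k - p i).+1 by move: hs'; rewrite /inseg; lia.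
rewrite /G gammaS /= -/G zf /= (H1 i) // hval_step.
by case: (hval c j w i (k - p i)).
Qed.

Lemma local_ok c d j (w : {ffun 'I_d -> bool}) i r : 1 <= j -> (i == j.-1 -> r = 0) ->
  let gk := hval c j w i r in
  let gp := if r == 0 then (if i == j then nat_of_bool (wn w j.-1) else 0)
            else hval c j w i r.-1 in
  (gk.+1 == gp) || ((gk == gp) && (r == 0)) =
  (disp c j w i == r) || ((i == j) && (disp c j w j.-1 == r.+1)).
Proof.
move=> hj hr; rewrite /hval /disp.
have jj : (j == j.-1) = false by lia.
case: (eqVneq i j) => [->|nij] /=.
  rewrite jj eqxx /=.
  by case: r {hr} => [|[|[|r]]] /=; case: (is_cap1 c); case: (wn w j.-1); case: (wn w j).
case: (eqVneq i j.-1) => [e|ne] /=.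
  by rewrite (hr (introT eqP e)) /=; case: (is_cap1 c); case: (wn w i); case: (wn w j).
by case: r {hr} => [|[|r]] /=; case: (wn w i).
Qed.

Definition p1 c d j a x (w : {ffun 'I_d -> bool}) i := init_pos a x i + disp c j w i.

Lemma p1_step c d j a x (w : {ffun 'I_d -> bool}) i : hyp d j x -> i.+1 < d ->
  p1 c j a x w i < p1 c j a x w i.+1.
Proof.
case=> hj xj xj1 xo hi; rewrite /p1 p0S.
suff : disp c j w i <= x i.+1 + disp c j w i.+1 by lia.
rewrite /disp.
case: (eqVneq i j.-1) => [e|ne].
  have -> : i.+1 = j by lia.
  rewrite xj (_ : (j == j.-1) = false) ?eqxx /=; last by lia.
  by rewrite e; case: (is_cap1 c); case: (wn w j.-1); case: (wn w j).
case: (eqVneq i j) => [e|ne2].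
  have h2 : 2 <= x i.+1 by rewrite e; apply: xj1; lia.
  case: (is_cap1 c); case: (wn w j.-1); case: (wn w j); rewrite /=; lia.
have h1 : 1 <= x i.+1 by apply: xo; lia.
case: (wn w i) => /=; lia.
Qed.

Lemma p1_mono c d j a x (w : {ffun 'I_d -> bool}) m n : hyp d j x -> m < n -> n < d ->
  p1 c j a x w m < p1 c j a x w n.
Proof.
move=> hy; elim: n => // n IH; rewrite ltnS leq_eqVlt => /orP [/eqP ->|h] hn.
  exact: p1_step.
apply: ltn_trans (IH h (ltnW hn)) (p1_step _ _ _ hy hn).
Qed.

Lemma p1_before c d j a x (w : {ffun 'I_d -> bool}) i : hyp d j x -> 1 <= i <= d.-1 -> i != j ->
  p1 c j a x w i.-1 < init_pos a x i.
Proof.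
case=> hj xj xj1 xo hi nij; rewrite /p1.
case: i hi nij => [|i] hi nij //=; rewrite p0S.
suff : disp c j w i <= x i.+1 by lia.
rewrite /disp.
have ne : (i == j.-1) = false by lia.
rewrite ne; case: (eqVneq i j) => [e|ne2].
  have h2 : 2 <= x i.+1 by rewrite e; apply: xj1; lia.
  case: (is_cap1 c); case: (wn w j.-1); case: (wn w j); rewrite /=; lia.
have h1 : 1 <= x i.+1 by apply: xo; lia.
case: (wn w i) => /=; lia.
Qed.

Lemma disp_le2 c d j (w : {ffun 'I_d -> bool}) i : disp c j w i <= 2.
Proof.
rewrite /disp; case: (i == j.-1); case: (i == j); case: (is_cap1 c);
  case: (wn w i); case: (wn w j); case: (wn w j.-1) => //.
Qed.

Lemma rhs_ok c d j a x (w : {ffun 'I_d -> bool}) i k : hyp d j x -> i < d ->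
  inseg d (init_pos a x) i k ->
  [exists o : 'I_d, p1 c j a x w o == k] =
  (disp c j w i == k - init_pos a x i) ||
  ((i == j) && (disp c j w j.-1 == (k - init_pos a x i).+1)).
Proof.
move=> hy id hs; have [hj xj xj1 xo] := hy.
set p := init_pos a x.
have pj : p j = (p j.-1).+1.
  have e : j = j.-1.+1 by lia.
  by rewrite {1}e /p p0S -e xj addn0.
move: hs; rewrite /inseg -/p => /andP [h1 h2].
apply/existsP/orP => [[o /eqP ko]|].
  case: (ltngtP o i) => h.
  - case: (eqVneq i j) => [e|nij].
      case: (eqVneq (o : nat) j.-1) => [oe|one].
        right; rewrite ?e ?eqxx /=; move: ko; rewrite /p1 oe -/p => ko; apply/eqP.
        move: e h1 => ->; rewrite pj; lia.
      have : p1 c j a x w o < p j.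
        have hjm : o <= (j.-1).-1 by lia.
        have hb := p1_before c a w hy (_ : 1 <= j.-1 <= d.-1) (_ : j.-1 != j).
        have hb' : p1 c j a x w (j.-1).-1 < p j.-1 by apply: hb; lia.
        have hp : p j.-1 < p j by rewrite pj.
        case: (ltngtP o (j.-1).-1) => ho.
        + have := p1_mono c a w hy ho (_ : (j.-1).-1 < d); rewrite -/p; lia.
        + lia.
        + rewrite ho; lia.
      rewrite ko -e; lia.
    have : p1 c j a x w o < p i.
      have hb : p1 c j a x w i.-1 < p i by apply: p1_before => //; lia.
      case: (ltngtP o i.-1) => ho.
      + have := p1_mono c a w hy ho (_ : i.-1 < d); rewrite -/p; lia.
      + lia.
      + rewrite ho; lia.
    rewrite ko; lia.
  - have hi1 : i.+1 < d by apply: leq_ltn_trans (ltn_ord o).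
    have := p0_le a x h; have := implyP h2 hi1; rewrite /p1 -/p in ko; rewrite -/p; lia.
  - left; rewrite /p1 -/p h in ko; apply/eqP; lia.
case=> [/eqP e|/andP [/eqP ij /eqP e]].
  exists (Ordinal id); rewrite /p1 /=; apply/eqP; rewrite -/p; lia.
have jd : j.-1 < d by lia.
exists (Ordinal jd); rewrite /p1 /=; apply/eqP; rewrite -/p; move: h1 e; rewrite ij pj; lia.
Qed.

Lemma next_ok c d j a x (w : {ffun 'I_d -> bool}) :
  c <> CapFin 0 -> 1 <= a -> 2 <= d -> hyp d j x -> forall k, 1 <= k ->
  sbbs_next c (config_of d (init_pos a x)) (coin_of (init_pos a x) w) k =
  [exists o : 'I_d, p1 c j a x w o == k].
Proof.
move=> hc ha hd hy k k1; have [hj xj xj1 xo] := hy.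
have GV := G_val w hc ha hd hy.
set p := init_pos a x in GV *.
set G := sbbs_gamma c (config_of d p) (coin_of p w) in GV *.
rewrite /sbbs_next -/G.
case: (ltnP k (p 0)) => hk.
  rewrite (proj1 (GV k)) // (proj1 (GV k.-1)); last lia.
  rewrite zeta_pre //= ?andbF; symmetry; apply/existsP => [[o /eqP ko]].
  have := p0_le a x (leq0n o); rewrite /p1 -/p in ko; rewrite -/p; lia.
have d0 : 0 < d by lia.
have [i id hs] := @locate d a x k d0 hk.
rewrite (rhs_ok c w hy id hs) (zeta_seg id hs) -/p.
rewrite ((proj2 (GV k)) i id hs).
have hs0 := hs; move: hs0; rewrite /inseg -/p => /andP [h1 h2].
have Gp : G k.-1 = if k - p i == 0 then (if i == j then nat_of_bool (wn w j.-1) else 0)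
                   else hval c j w i (k - p i).-1.
  case: (eqVneq (k - p i) 0) => [r0|rn0].
    case: i id hs h1 h2 r0 => [|i] id hs h1 h2 r0.
      rewrite (proj1 (GV k.-1)); last lia. by rewrite (_ : (0 == j) = false) //; lia.
    have hs' : inseg d p i k.-1.
      rewrite /inseg; apply/andP; split.
        have := p0_lt a x (ltnSn i); rewrite -/p; lia.
      apply/implyP => _; lia.
    rewrite ((proj2 (GV k.-1)) i) //; last lia.
    have -> : k.-1 - p i = x i.+1 by move: h1 r0; rewrite /p p0S; lia.
    by rewrite -(hval_last c w hy) //; lia.
  have hs' : inseg d p i k.-1.
    rewrite /inseg; apply/andP; split; first lia.
    apply/implyP => hi; have := implyP h2 hi; lia.
  rewrite ((proj2 (GV k.-1)) i) //; congr hval; lia.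
rewrite Gp.
have hr : i == j.-1 -> k - p i = 0.
  move=> /eqP e; have hi : i.+1 < d by lia.
  have e2 : i.+1 = j by lia.
  have := implyP h2 hi; rewrite /p p0S e2 xj -/p; lia.
have j1 : 1 <= j by lia.
have L := @local_ok c d j w i (k - p i) j1 hr; simpl in L.
have -> : (k == p i) = (k - p i == 0) by lia.
exact: L.
Qed.

Local Open Scope ring_scope.

Lemma E_prod (R : comNzRingType) d (G : 'I_d -> bool -> R) :
  \sum_(w : {ffun 'I_d -> bool}) \prod_i G i (w i) = \prod_i (G i true + G i false).
Proof.
rewrite -bigA_distr_bigA /=; apply: eq_bigr => i _; by rewrite big_bool.
Qed.

Lemma E_set (R : comNzRingType) d (eps : R) (S : pred 'I_d) :
  \sum_(w : {ffun 'I_d -> bool}) coin_prob eps w * \prod_(i | S i) (w i)%:R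
  = \prod_(i | S i) (1 - eps).
Proof.
rewrite (eq_bigr (fun w : {ffun 'I_d -> bool} => \prod_i
   ((if w i then 1 - eps else eps) * (if S i then (w i)%:R else 1)))); last first.
  by move=> w _; rewrite big_split /= -big_mkcond.
rewrite (@E_prod _ _ (fun i b => (if b then 1 - eps else eps) * (if S i then (b:bool)%:R else 1))) [RHS]big_mkcond /=; apply: eq_bigr => i _.
by case: (S i); rewrite /= ?mulr1 ?mulr0 ?addr0 // subrK.
Qed.

Lemma E1 (R : comNzRingType) d (eps : R) (o : 'I_d) :
  \sum_(w : {ffun 'I_d -> bool}) coin_prob eps w * (w o)%:R = 1 - eps.
Proof.
have H := @E_set _ _ eps (pred1 o); rewrite big_pred1_eq in H.
rewrite -H; apply: eq_bigr => w _; by rewrite big_pred1_eq.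
Qed.

Lemma E2 (R : comNzRingType) d (eps : R) (o o' : 'I_d) : o != o' ->
  \sum_(w : {ffun 'I_d -> bool}) coin_prob eps w * (w o && w o')%:R = (1 - eps) ^+ 2.
Proof.
move=> ne.
have H : forall F : 'I_d -> R, \prod_(i | (i == o) || (i == o')) F i = F o * F o'.
  move=> F; rewrite (bigD1 o) ?eqxx //= (bigD1 o') /=; last by rewrite eqxx orbT eq_sym ne.
  rewrite big1 ?mulr1 //.
  by move=> i /andP [/andP [/orP [] /eqP -> ]]; rewrite ?eqxx.
rewrite expr2 -[RHS](H (fun _ => 1 - eps)) -(@E_set _ _ eps [pred i | (i == o) || (i == o')]).
apply: eq_bigr => w _; rewrite H; congr (_ * _).
by case: (w o); case: (w o'); rewrite /= ?mul1r ?mul0r.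
Qed.

Lemma E_lin (R : comNzRingType) d (eps : R) (f g : {ffun 'I_d -> bool} -> R) :
  \sum_w coin_prob eps w * (f w + g w) =
  \sum_w coin_prob eps w * f w + \sum_w coin_prob eps w * g w.
Proof. by rewrite -big_split /=; apply: eq_bigr => w _; rewrite mulrDr. Qed.

Lemma E_linB (R : comNzRingType) d (eps : R) (f g : {ffun 'I_d -> bool} -> R) :
  \sum_w coin_prob eps w * (f w - g w) =
  \sum_w coin_prob eps w * f w - \sum_w coin_prob eps w * g w.
Proof. by rewrite -sumrB /=; apply: eq_bigr => w _; rewrite mulrBr. Qed.

Lemma E1' (R : comNzRingType) d (eps : R) k : (k < d)%N ->
  \sum_(w : {ffun 'I_d -> bool}) coin_prob eps w * (wn w k)%:R = 1 - eps.
Proof.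
move=> hk; rewrite -(@E1 _ _ eps (Ordinal hk)); apply: eq_bigr => w _.
by rewrite -(wnE w (Ordinal hk)).
Qed.

Lemma E2' (R : comNzRingType) d (eps : R) k l : (k < d)%N -> (l < d)%N -> k != l ->
  \sum_(w : {ffun 'I_d -> bool}) coin_prob eps w * (wn w k && wn w l)%:R = (1 - eps) ^+ 2.
Proof.
move=> hk hl ne; rewrite -(@E2 _ _ eps (Ordinal hk) (Ordinal hl)) //.
by apply: eq_bigr => w _; rewrite -(wnE w (Ordinal hk)) -(wnE w (Ordinal hl)).
Qed.

Definition Ed (R : nzRingType) (eps : R) c j (k : nat) : R :=
  if k == j.-1 then (if is_cap1 c then 1 - eps else (1 - eps) + (1 - eps) ^+ 2)
  else if k == j then (if is_cap1 c then (1 - eps) + (1 - eps) - (1 - eps) ^+ 2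
                       else (1 - eps) + (1 - eps))
  else 1 - eps.

Lemma Edisp (R : comNzRingType) d (eps : R) c j k : (1 <= j < d)%N -> (k < d)%N ->
  \sum_(w : {ffun 'I_d -> bool}) coin_prob eps w * (disp c j w k)%:R = Ed eps c j k.
Proof.
move=> hj hk; have hj1 : (j.-1 < d)%N by lia.
have hj2 : (j < d)%N by lia.
have nj : j.-1 != j by lia.
rewrite /disp /Ed.
case: (eqVneq k j.-1) => [e|ne1]; rewrite ?e.
  case: (is_cap1 c); first exact: E1'.
  rewrite (eq_bigr (fun w => coin_prob eps w * ((wn w j.-1)%:R + (wn w j.-1 && wn w j)%:R)));
    last by move=> w _; rewrite natrD.
  by rewrite E_lin E1' // E2'.
case: (eqVneq k j) => [e|ne2]; rewrite ?e; last exact: E1'.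
case: (is_cap1 c).
  rewrite (eq_bigr (fun w => coin_prob eps w * (((wn w j.-1)%:R + (wn w j)%:R) - (wn w j.-1 && wn w j)%:R)));
    last by move=> w _; case: (wn w j.-1); case: (wn w j); rewrite /= ?mulr1n ?mulr0n; ring.
  by rewrite E_linB E_lin !E1' // E2'.
rewrite (eq_bigr (fun w => coin_prob eps w * ((wn w j.-1)%:R + (wn w j)%:R)));
  last by move=> w _; rewrite natrD.
by rewrite E_lin !E1'.
Qed.

Ltac decide_ifs := repeat match goal with |- context [if ?b then _ else _] =>
  first [ rewrite (_ : b = true); [| lia] | rewrite (_ : b = false); [| lia] ] end.

Lemma gap_eq (R : realFieldType) c d j a x (w : {ffun 'I_d -> bool}) i :
  hyp d j x -> (1 <= i <= d.-1)%N ->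
  ((gap (p1 c j a x w) i)%:R - (x i)%:R : R) =
  (disp c j w i)%:R - (disp c j w i.-1)%:R.
Proof.
move=> hy hi.
have mono := @p1_mono c d j a x w i.-1 i hy (ltac:(lia)) (ltac:(lia)).
have pe : init_pos a x i = (init_pos a x i.-1 + x i).+1.
  have e : i = i.-1.+1 by lia.
  by rewrite {1}e p0S -e.
have e : (gap (p1 c j a x w) i + disp c j w i.-1 = x i + disp c j w i)%N.
  move: mono; rewrite /gap /p1 pe; lia.
have := congr1 (fun n : nat => n%:R : R) e; rewrite !natrD => h; lra.
Qed.

Lemma entry1E (R : nzRingType) r (M : 'M[R]_r) i j (hi : (i.-1 < r)%N) (hj : (j.-1 < r)%N) :
  entry1 M i j = M (Ordinal hi) (Ordinal hj).
Proof.
rewrite /entry1; case: insubP => [i' _ ei|]; last by rewrite hi.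
case: insubP => [j' _ ej|]; last by rewrite hj.
by congr (M _ _); apply: val_inj.
Qed.

Unset Implicit Arguments.

Theorem proposition6p3 (R : realFieldType) (d : nat) (eps : R) (c : cap)
  (j : nat) (x : nat -> nat) (a : nat) :
  (2 <= d)%N -> 0 < eps < 1 -> c <> CapFin 0 ->
  (1 <= j <= d.-1)%N ->
  x j = 0%N ->
  ((j.+1 <= d.-1)%N -> (2 <= x j.+1)%N) ->
  (forall i, (1 <= i <= d.-1)%N -> i <> j -> i <> j.+1 -> (1 <= x i)%N) ->
  (1 <= a)%N ->
  let p0 := init_pos a x in
  let zeta0 := config_of d p0 in
  exists p1 : {ffun 'I_d -> bool} -> nat -> nat,
    (forall w, balls_at (sbbs_next c zeta0 (coin_of p0 w)) d (p1 w)) /\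
    forall i, (1 <= i <= d.-1)%N ->
      let drift := \sum_(w : {ffun 'I_d -> bool})
                     coin_prob eps w * ((gap (p1 w) i)%:R - (x i)%:R) in
      drift = drift_formula eps c j i /\
      drift = (1 - eps) * entry1 (Rhat d eps c) i j.
Proof.
move=> hd heps hc hj xj xj1 xo ha p0 zeta0.
have hy : hyp d j x by split.
exists (fun w => p1 c j a x w); split.
  move=> w; split.
  - by move=> i hi; exact: p1_step.
  - rewrite /p1 /init_pos; lia.
  - by move=> k hk; exact: next_ok.
move=> i hi drift.
have -> : drift = Ed eps c j i - Ed eps c j i.-1.
  rewrite /drift (eq_bigr (fun w => coin_prob eps w *
     ((disp c j w i)%:R - (disp c j w i.-1)%:R))); last first.
    by move=> w _; rewrite gap_eq.
  rewrite E_linB !Edisp //; lia.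
have hi1 : (i.-1 < d.-1)%N by lia.
have hj1 : (j.-1 < d.-1)%N by lia.
rewrite (entry1E _ hi1 hj1) /Rhat /R_PT /tridiag /Ed /drift_formula.
have oe : (Ordinal hi1 == Ordinal hj1) = (i.-1 == j.-1) by [].
case: (is_cap1 c); rewrite ?mxE /= oe.
  case: (eqVneq i j) => [->|n1]; [| case: (eqVneq i j.+1) => [->|n2];
    [| case: (eqVneq i.+1 j) => [<-|n3]]]; decide_ifs; split; ring.
case: (eqVneq i j) => [->|n1]; [| case: (eqVneq i j.+1) => [->|n2];
  [| case: (eqVneq i.+1 j) => [<-|n3]]]; decide_ifs; split; ring.
Qed.
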